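(* Let $B\ge 2$ and $\eta\in\mathbb{N}$. Then $t_{\eta+1}\;\ge\;\left\lfloor\dfrac{\gamma_B(\eta)}{(B-1)^2}\right\rfloor-(2B-4)$.
   Context: Fix an integer base $B \geq 2$. Every integer $x>0$ is written uniquely as $x=\sum_{i=0}^{L(x)-1} x_i B^i$ with digits $0 \le x_i \le B-1$ and $x_{L(x)-1}\neq 0$. Define $\mathcal{H}_B(x)=\sum_{i=0}^{L(x)-1} x_i^2$, $\mathcal{H}_B(0)=0$, $\mathcal{H}_B^0(x)=x$, $\mathcal{H}_B^{n}=\mathcal{H}_B\circ\mathcal{H}_B^{n-1}$. A positive integer $x$ is happy if $\mathcal{H}_B^n(x)=1$ for some $n\in\mathbb{N}$; its height is $\eta_B(x)=\min\{\alpha\in\mathbb{N}:\mathcal{H}_B^\alpha(x)=1\}$. For $n\in\mathbb{N}$, $\gamma_B(n)$ denotes the smallest happy number $x\ge 1$ with $\eta_B(x)=n$. For each $n$, $L_n=L(\gamma_B(n))$ is the number of base-$B$ digits of $\gamma_B(n)$, $t_n$ is the number of those digits equal to $B-1$, and $\alpha_n=L_n-t_n$ is the number of digits smaller than $B-1$. $\lfloor\cdot\rfloor$ is the integer part. *)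

(* Defs.v *)
From mathcomp Require Import all_boot.
Set Implicit Arguments. Unset Strict Implicit. Unset Printing Implicit Defensive.

(* Base-B digits of x, least significant first; digits B 0 = [::].
   The fuel x suffices since x %/ B < x for B >= 2, x > 0. *)
Fixpoint digits_aux (B fuel x : nat) : seq nat :=
  if fuel is k.+1 then
    if x == 0 then [::] else (x %% B) :: digits_aux B k (x %/ B)
  else [::].

Definition digits (B x : nat) : seq nat := digits_aux B x x.

Definition H (B x : nat) : nat := sumn [seq d ^ 2 | d <- digits B x].

Definition happy (B x : nat) : Prop := 0 < x /\ exists n, iter n (H B) x = 1.

Definition height (B x n : nat) : Prop :=
  iter n (H B) x = 1 /\ forall m, m < n -> iter m (H B) x <> 1.

Definition is_gamma (B n g : nat) : Prop :=
  [/\ 1 <= g, happy B g, height B g n &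
      forall y, 1 <= y -> happy B y -> height B y n -> g <= y].

Definition tcount (B x : nat) : nat := count (pred1 B.-1) (digits B x).

(* Main.v *)
Require Import Defs.
From mathcomp Require Import all_boot.
From Stdlib Require Import ZArith Lia Psatz Wf_nat.
From mathcomp Require Import all_boot zify.
Section Lag.
Local Open Scope Z_scope.

Definition sq4 (a b c d : Z) := a*a+b*b+c*c+d*d.

Lemma center (m x : Z) : 0 < m -> exists k y, x = m*k + y /\ -(m/2) <= y /\ y <= m - 1 - m/2.
Proof.
move=> Hm.
exists ((x + m/2)/m), ((x + m/2) mod m - m/2).
have H1 := Z.div_mod (x + m/2) m ltac:(lia).
have H2 := Z.mod_pos_bound (x + m/2) m Hm.
lia.
Qed.

Lemma descent (p : Z) (Hp : 1 < p) (Hpr : forall d k, 1 < d < p -> d * k <> p) :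
  forall n : nat, forall m, m = Z.of_nat n -> 1 <= m < p ->
  (exists x1 x2 x3 x4, m*p = sq4 x1 x2 x3 x4) -> exists a b c d, p = sq4 a b c d.
Proof.
intros n; induction n as [n IH] using lt_wf_ind.
intros m Hmn Hm [x1 [x2 [x3 [x4 Hx]]]].
destruct (Z.eq_dec m 1) as [->|Hm1].
{ exists x1, x2, x3, x4; lia. }
have Hm0 : 0 < m by lia.
destruct (center m x1 Hm0) as [k1 [y1 [E1 [L1 U1]]]].
destruct (center m x2 Hm0) as [k2 [y2 [E2 [L2 U2]]]].
destruct (center m x3 Hm0) as [k3 [y3 [E3 [L3 U3]]]].
destruct (center m x4 Hm0) as [k4 [y4 [E4 [L4 U4]]]].
have Hh := Z.div_mod m 2 ltac:(lia).
have Hh2 := Z.mod_pos_bound m 2 ltac:(lia).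
remember (m/2) as h eqn:Eh.
remember (m mod 2) as e eqn:Ee.
clear Eh Ee.
set r := p - (2*(k1*y1+k2*y2+k3*y3+k4*y4) + m*(k1*k1+k2*k2+k3*k3+k4*k4)).
have Hr : m * r = sq4 y1 y2 y3 y4.
{ unfold r, sq4 in *. subst x1 x2 x3 x4. nia. }
have B1 : y1*y1 <= h*h by nia.
have B2 : y2*y2 <= h*h by nia.
have B3 : y3*y3 <= h*h by nia.
have B4 : y4*y4 <= h*h by nia.
have Hr0 : 0 <= r.
{ unfold sq4 in Hr. nia. }
have Hrm : r <= m.
{ unfold sq4 in Hr. nia. }
destruct (Z.eq_dec r 0) as [Hr00|Hrn0].
{ exfalso. rewrite Hr00 in Hr. unfold sq4 in Hr.
  have Z1 : y1 = 0 by nia. have Z2 : y2 = 0 by nia.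
  have Z3 : y3 = 0 by nia. have Z4 : y4 = 0 by nia.
  subst y1 y2 y3 y4 x1 x2 x3 x4. unfold sq4 in Hx.
  apply (Hpr m (k1*k1+k2*k2+k3*k3+k4*k4)); first lia.
  apply (Z.mul_reg_l _ _ m); first lia. rewrite Hx. ring. }
destruct (Z.eq_dec r m) as [Hrm2|Hrnm].
{ exfalso. rewrite Hrm2 in Hr. unfold sq4 in Hr.
  destruct (Z.eq_dec e 0) as [He|He]; last nia.
  rewrite He in Hh.
  have Z1 : y1 = -h by nia. have Z2 : y2 = -h by nia.
  have Z3 : y3 = -h by nia. have Z4 : y4 = -h by nia.
  subst y1 y2 y3 y4 x1 x2 x3 x4. unfold sq4 in Hx.
  apply (Hpr m (k1*k1+k2*k2+k3*k3+k4*k4 - (k1+k2+k3+k4) + 1)); first lia.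
  apply (Z.mul_reg_l _ _ m); first lia. rewrite Hx. rewrite Hh. ring. }
set w1 := r + (k1*y1+k2*y2+k3*y3+k4*y4).
set w2 := k1*y2 - k2*y1 + k3*y4 - k4*y3.
set w3 := k1*y3 - k3*y1 + k4*y2 - k2*y4.
set w4 := k1*y4 - k4*y1 + k2*y3 - k3*y2.
have Z1 : x1*y1 + x2*y2 + x3*y3 + x4*y4 = m*w1.
{ unfold w1, sq4 in *. subst x1 x2 x3 x4. nia. }
have Z2 : x1*y2 - x2*y1 + x3*y4 - x4*y3 = m*w2.
{ unfold w2. subst x1 x2 x3 x4. ring. }
have Z3 : x1*y3 - x3*y1 + x4*y2 - x2*y4 = m*w3.
{ unfold w3. subst x1 x2 x3 x4. ring. }
have Z4 : x1*y4 - x4*y1 + x2*y3 - x3*y2 = m*w4.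
{ unfold w4. subst x1 x2 x3 x4. ring. }
have Eul : sq4 x1 x2 x3 x4 * sq4 y1 y2 y3 y4 =
  sq4 (x1*y1 + x2*y2 + x3*y3 + x4*y4) (x1*y2 - x2*y1 + x3*y4 - x4*y3)
      (x1*y3 - x3*y1 + x4*y2 - x2*y4) (x1*y4 - x4*y1 + x2*y3 - x3*y2).
{ unfold sq4. ring. }
rewrite Z1 Z2 Z3 Z4 -Hx -Hr in Eul.
apply (IH (Z.to_nat r) ltac:(lia) r); [lia | lia |].
exists w1, w2, w3, w4.
apply (Z.mul_reg_l _ _ (m*m)); first nia.
unfold sq4 in *. rewrite -[LHS]/((m*m)*(r*p)).
transitivity (m * p * (m * r)); first ring.
rewrite Eul. ring.
Qed.

End Lag.
Lemma sq_inj p x y : prime p -> x <= p./2 -> y <= p./2 ->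
  x * x = y * y %[mod p] -> x = y.
Proof.
move=> pp hx hy.
have hp := prime_gt1 pp.
have hh : p./2 + p./2 <= p by rewrite addnn; rewrite -[leqRHS]odd_double_half; lia.
wlog le : x y hx hy / x <= y.
  move=> W E; case: (leqP x y) => l; first exact: W.
  by symmetry; apply: W => //; lia.
move=> /eqP; rewrite eq_sym eqn_mod_dvd; last by apply: leq_mul.
have -> : y * y - x * x = (y - x) * (y + x) by rewrite -subn_sqr.
rewrite Euclid_dvdM //; case/orP=> /dvdn_leq H.
- case: (posnP (y - x)) => [|/H]; lia.
- case: (posnP (y + x)) => [|/H]; lia.
Qed.

Lemma modsub_inj p v w : v < p -> w < p -> (p - v) %% p = (p - w) %% p -> v = w.
Proof.
move=> hv hw.
have E u : u < p -> (p - u) %% p = if u == 0 then 0 else p - u.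
  move=> hu; case: eqP => [->|nz]; first by rewrite subn0 modnn.
  by rewrite modn_small; lia.
rewrite !E //; case: eqP; case: eqP; lia.
Qed.

Lemma exists_xy p : prime p -> exists x y, [/\ x <= p./2, y <= p./2 & p %| x * x + y * y + 1].
Proof.
move=> pp; have hp := prime_gt1 pp.
set h := p./2.
set A := [seq (x * x) %% p | x <- iota 0 h.+1].
set C := [seq (p - (y * y + 1) %% p) %% p | y <- iota 0 h.+1].
have uA : uniq A.
  rewrite map_inj_in_uniq ?iota_uniq // => x y; rewrite !mem_iota => /andP[_ hx] /andP[_ hy] E.
  apply: (@sq_inj p x y pp); lia.
have uC : uniq C.
  rewrite map_inj_in_uniq ?iota_uniq // => x y; rewrite !mem_iota => /andP[_ hx] /andP[_ hy] E.
  have E2 := @modsub_inj p _ _ (ltn_pmod _ (ltnW hp)) (ltn_pmod _ (ltnW hp)) E.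
  apply: (@sq_inj p x y pp); [lia|lia|].
  by move/eqP: E2; rewrite eqn_modDr => /eqP.
have : has (mem A) C.
  apply/negPn/negP => nh.
  have u : uniq (A ++ C) by rewrite cat_uniq uA uC andbT; apply: contra nh => /hasP[z zA zC]; apply/hasP; exists z.
  have := uniq_leq_size u (s2 := iota 0 p).
  have sub : {subset A ++ C <= iota 0 p}.
    move=> z; rewrite mem_cat mem_iota add0n => /orP[] /mapP[? _ ->]; apply: ltn_pmod; lia.
  move/(_ sub); rewrite size_cat !size_map !size_iota.
  have := odd_double_half p; rewrite -/h; lia.
case/hasP=> z /mapP[y]; rewrite mem_iota => /andP[_ hy] -> /mapP[x]; rewrite mem_iota => /andP[_ hx] E.
exists x, y; split; [lia|lia|].
rewrite /dvdn -addnA -modnDm -E.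
have hv := ltn_pmod (y * y + 1) (ltnW hp).
case: (posnP ((y * y + 1) %% p)) => [->|v0].
  by rewrite subn0 modnn add0n mod0n.

rewrite (@modn_small (p - (y * y + 1) %% p) p); last lia.
rewrite subnK; [by rewrite modnn | lia].
Qed.

Definition sum4 (n : nat) := exists a b c d : nat, n = a*a+b*b+c*c+d*d.

Lemma z2n (n : nat) a b c d : Z.of_nat n = sq4 a b c d -> sum4 n.
Proof.
rewrite /sq4 => E; exists (Z.abs_nat a), (Z.abs_nat b), (Z.abs_nat c), (Z.abs_nat d).
nia.
Qed.

Lemma sum4_mul n m : sum4 n -> sum4 m -> sum4 (n * m).
Proof.
move=> [x1 [x2 [x3 [x4 Ex]]]] [y1 [y2 [y3 [y4 Ey]]]].
pose X1 := Z.of_nat x1; pose X2 := Z.of_nat x2; pose X3 := Z.of_nat x3; pose X4 := Z.of_nat x4.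
pose Y1 := Z.of_nat y1; pose Y2 := Z.of_nat y2; pose Y3 := Z.of_nat y3; pose Y4 := Z.of_nat y4.
apply: (@z2n (n * m) (X1*Y1 + X2*Y2 + X3*Y3 + X4*Y4)%Z (X1*Y2 - X2*Y1 + X3*Y4 - X4*Y3)%Z
   (X1*Y3 - X3*Y1 + X4*Y2 - X2*Y4)%Z (X1*Y4 - X4*Y1 + X2*Y3 - X3*Y2)%Z).
have -> : Z.of_nat (n * m) = (Z.of_nat n * Z.of_nat m)%Z by lia.
rewrite Ex Ey /sq4 /X1 /X2 /X3 /X4 /Y1 /Y2 /Y3 /Y4.
rewrite !Nat2Z.inj_add !Nat2Z.inj_mul. ring.
Qed.

Lemma lagrange_prime p : prime p -> sum4 p.
Proof.
move=> pp; have hp := prime_gt1 pp.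
case: (boolP (odd p)) => op; last first.
  by move/(prime_oddPn pp): op => ->; exists 1, 1, 0, 0.
have hd := odd_double_half p; rewrite op /= in hd.
have [x [y [hx hy dv]]] := exists_xy p pp.
set S := x * x + y * y + 1 in dv.
have ES := divnK dv.
set m := S %/ p in ES.
have m1 : 1 <= m by case: (posnP m) => // m0; move: ES; rewrite m0 /S; lia.
have mp : m < p.
  have : S < p * p by rewrite /S; nia.
  rewrite -ES; nia.
have Hpr : forall d k : Z, (1 < d < Z.of_nat p)%Z -> (d * k <> Z.of_nat p)%Z.
  move=> d k hd' E.
  have k0 : (0 < k)%Z by nia.
  have E2 : (Z.to_nat d * Z.to_nat k = p)%N by nia.
  case/primeP: pp => _ /(_ (Z.to_nat d)).
  rewrite -E2 dvdn_mulr // => /(_ isT) /orP[] /eqP; lia.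
have Hex : exists x1 x2 x3 x4, (Z.of_nat m * Z.of_nat p = sq4 x1 x2 x3 x4)%Z.
  exists (Z.of_nat x), (Z.of_nat y), 1%Z, 0%Z; rewrite /sq4; move: ES; rewrite /S; lia.
have [a [b [c [d E]]]] := descent (Z.of_nat p) ltac:(lia) Hpr m (Z.of_nat m) erefl ltac:(lia) Hex.
exact: (@z2n p a b c d E).
Qed.

Lemma lagrange n : sum4 n.
Proof.
elim: n {-2}n (leqnn n) => [|N IH] n hn.
  have -> : n = 0 by lia.
  by exists 0, 0, 0, 0.
case: (leqP n 1) => n1.
  case: n n1 {hn} => [|[|//]] _; [by exists 0, 0, 0, 0 | by exists 1, 0, 0, 0].
have pp := pdiv_prime n1.
have -> : n = pdiv n * (n %/ pdiv n) by rewrite mulnC divnK // pdiv_dvd.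
apply: sum4_mul; first exact: lagrange_prime.
apply: IH; have := ltn_Pdiv (prime_gt1 pp) (ltnW n1); lia.
Qed.
Section Dig.
Variable B : nat.
Hypothesis HB : 2 <= B.

Lemma daux_eq f1 f2 x : x <= f1 -> x <= f2 -> digits_aux B f1 x = digits_aux B f2 x.
Proof.
elim: f1 f2 x => [|f1 IH] [|f2] x /= h1 h2.
- by [].
- have -> : x = 0 by lia. by [].
- have -> : x = 0 by lia. by [].
- case: eqP => // /eqP x0; congr (_ :: _); apply: IH.
  + have := ltn_Pdiv (m:=x) HB ltac:(lia); lia.
  + have := ltn_Pdiv (m:=x) HB ltac:(lia); lia.
Qed.

Lemma digits0 : digits B 0 = [::].
Proof. by []. Qed.

Lemma digitsS x : 0 < x -> digits B x = x %% B :: digits B (x %/ B).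
Proof.
move=> x0; rewrite /digits; case: x x0 => // k _ /=.
congr (_ :: _); apply: daux_eq => //.
have := ltn_Pdiv HB (ltn0Sn k); lia.
Qed.

Definition num (l : seq nat) := foldr (fun d acc => d + B * acc) 0 l.

Lemma num_digits x : num (digits B x) = x.
Proof.
elim: x {-2}x (leqnn x) => [|n IH] x hx.
  by have -> : x = 0 by lia.
case: (posnP x) => [->//|x0].
rewrite digitsS //= IH; last by have := ltn_Pdiv HB x0; lia.
by rewrite mulnC addnC -divn_eq.
Qed.

Lemma digits_lt x : all (fun d => d < B) (digits B x).
Proof.
elim: x {-2}x (leqnn x) => [|n IH] x hx.
  by have -> : x = 0 by lia.
case: (posnP x) => [->//|x0].
rewrite digitsS //= ltn_pmod ?(leq_trans _ HB) //= IH //.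
by have := ltn_Pdiv HB x0; lia.
Qed.

Lemma digits_size x : 0 < x -> B ^ (size (digits B x)).-1 <= x.
Proof.
elim: x {-2}x (leqnn x) => [|n IH] x hx x0; first lia.
rewrite digitsS //=.
case: (posnP (x %/ B)) => [q0|q0].
  by rewrite q0 digits0.
have h1 := IH (x %/ B) ltac:(have := ltn_Pdiv HB x0; lia) q0.
have h2 : 0 < size (digits B (x %/ B)) by rewrite digitsS.
rewrite -(prednK h2) expnS.
apply: (leq_trans (leq_mul (leqnn B) h1)).
by rewrite mulnC leq_divM.
Qed.

Lemma num_pos l : last 1 l != 0 -> l != [::] -> 0 < num l.
Proof.
elim: l => // d l IH /= hl _.
case: l IH hl => [|e l] IH /= hl; first by rewrite muln0 addn0; lia.
have := IH hl isT => /= h.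
have : 0 < B * (e + B * num l) by rewrite muln_gt0 h; lia.
lia.
Qed.

Lemma digits_num l : all (fun d => d < B) l -> last 1 l != 0 -> digits B (num l) = l.
Proof.
elim: l => // d l IH /= /andP[hd hl] hlast.
have pos : 0 < num (d :: l) by apply: num_pos.
rewrite digitsS //=.
have e1 : (d + B * num l) %% B = d by rewrite addnC mulnC modnMDl modn_small.
have e2 : (d + B * num l) %/ B = num l by rewrite addnC mulnC divnMDl ?(leq_trans _ HB) // divn_small // addn0.
rewrite e1 e2 IH //.
by case: l {IH hl e1 e2 pos} hlast.
Qed.

Lemma num_lt l : all (fun d => d < B) l -> num l < B ^ size l.
Proof.
elim: l => [|d l IH] /=; first by [].
move=> /andP[hd /IH h]; rewrite expnS.
have : B * (num l).+1 <= B * B ^ size l by rewrite leq_mul2l h orbT.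
lia.
Qed.

End Dig.

Lemma H0 B : H B 0 = 0.
Proof. by []. Qed.

Lemma iterH0 B n : iter n (H B) 0 = 0.
Proof. by elim: n => //= n ->. Qed.

Lemma sq_split c s : sumn [seq d ^ 2 | d <- s] =
  count (pred1 c) s * c ^ 2 + sumn [seq d ^ 2 | d <- filter (predC1 c) s].
Proof.
elim: s => //= d s ->; case: eqP => [->|_] /=; lia.
Qed.

Lemma sum_bound (b : nat) s : all (fun d => d <= b) s ->
  sumn [seq d ^ 2 | d <- s] <= size s * b ^ 2.
Proof.
elim: s => //= d s IH /andP[hd /IH h].
have : d ^ 2 <= b ^ 2 by rewrite leq_exp2r.
rewrite mulSn; lia.
Qed.

Lemma sumsq_nseq n c : sumn [seq d ^ 2 | d <- nseq n c] = n * c ^ 2.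
Proof. by elim: n => //= n ->; rewrite mulSn. Qed.


Lemma arith_key0 P Q K N q : 0 < P -> P = Q + K -> 4 * Q < K * K -> K * P <= N -> q * P <= N ->
  (q + 4) * Q < N.
Proof.
move=> P0 eP s1 h1 h2.
have s2 : K * K * P <= N * K by rewrite -mulnA mulnC leq_mul2r h1 orbT.
have s4 : 4 * Q * P < N * K by apply: leq_trans s2; rewrite ltn_pmul2r.
have s5 : q * P * Q <= N * Q by rewrite leq_mul2r h2 orbT.
rewrite -(ltn_pmul2r P0).
have -> : (q + 4) * Q * P = q * P * Q + 4 * Q * P by rewrite !mulnDl [q * Q * P]mulnAC.
have -> : N * P = N * Q + N * K by rewrite eP mulnDr.
lia.
Qed.

Lemma arith_key B N q : 2 <= B -> (2 * B - 3) * B.-1 ^ 2 <= N -> q * B.-1 ^ 2 <= N ->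
  (q + 4) * (B - 2) ^ 2 < N.
Proof.
move=> HB; apply: arith_key0.
- rewrite expn_gt0; lia.
- case: B HB => [|[|b]] //= _; rewrite !expnS !expn0 !muln1; lia.
- case: B HB => [|[|b]] //= _; rewrite !expnS !expn0 !muln1; lia.
Qed.

Lemma sq_lt a c : a * a < c * c -> a < c.
Proof. rewrite ltnNge => h; rewrite ltnNge; apply: contra h => h; exact: leq_mul. Qed.

Lemma arith1 P q r k : 0 < P -> 1 <= k -> k * P <= q * P + r -> r < P -> 1 <= q.
Proof.
move=> P0 k1 h hr; case: q h => // h; rewrite mul0n add0n in h.
have : P <= k * P by rewrite leq_pmull.
lia.
Qed.

Theorem corollary2p4 (B eta g g' : nat) :
  2 <= B ->
  is_gamma B eta g -> is_gamma B eta.+1 g' ->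
  g %/ (B.-1 ^ 2) - (2 * B - 4) <= tcount B g'.
Proof.
move=> HB [g1 _ _ gmin] [g'1 [_ _] [hit hne] g'min].
have gle : g <= H B g'.
  have Hpos : 1 <= H B g'.
    case: (posnP (H B g')) => // h0.
    by move: hit; rewrite iterSr h0 iterH0.
  apply: gmin => //.
    by split => //; exists eta; rewrite -iterSr.
  split; first by rewrite -iterSr.
  by move=> m hm; rewrite -iterSr; apply: hne.
have swap : forall y, 1 <= y -> y != 1 -> H B y = H B g' -> g' <= y.
  move=> y y1 yn1 hy.
  have ht : iter eta.+1 (H B) y = 1 by rewrite iterSr hy -iterSr.
  apply: g'min => //; first by split => //; exists eta.+1.
  split => // -[|m] hm; first by apply/eqP.
  rewrite iterSr hy -iterSr; exact: hne.
set D := digits B g'.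
set t := tcount B g'.
set R := filter (predC1 B.-1) D.
set N := sumn [seq d ^ 2 | d <- R].
set P := B.-1 ^ 2.
have HD : H B g' = t * P + N by rewrite /H (sq_split B.-1).
have P0 : 0 < P by rewrite /P expn_gt0; lia.
have Rb : all (fun d => d <= B - 2) R.
  apply/allP => d; rewrite mem_filter => /andP[/= ne dD].
  have := allP (digits_lt B HB g') d dD => /= lt; lia.
have NR := @sum_bound (B - 2) R Rb.
have sD : size D = t + size R by rewrite size_filter /t /tcount -/D count_predC.
have Nlt : N < (2 * B - 3) * P.
  rewrite ltnNge; apply/negP => Nge.
  set q := N %/ P; set r := N %% P.
  have Nqr : N = q * P + r by rewrite /q /r -divn_eq.
  have rlt : r < P by rewrite /r ltn_pmod.
  have q1 : 1 <= q.
    apply: (@arith1 P q r (2 * B - 3) P0); [lia | by rewrite -Nqr | exact: rlt].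
  have [a [b [c [d Er]]]] := lagrange r.
  have ha : a < B.-1 by apply: sq_lt; rewrite mulnn -/P; lia.
  have hb : b < B.-1 by apply: sq_lt; rewrite mulnn -/P; lia.
  have hc : c < B.-1 by apply: sq_lt; rewrite mulnn -/P; lia.
  have hd : d < B.-1 by apply: sq_lt; rewrite mulnn -/P; lia.
  set l := [:: a; b; c; d] ++ nseq (t + q) B.-1.
  have lall : all (fun d => d < B) l.
    rewrite all_cat /= all_nseq andbT; apply/andP; split; first by apply/and4P; split; lia.
    by apply/orP; right; lia.
  have llast : last 1 l != 0.
    have tq : 0 < t + q by lia.
    rewrite /l last_cat /=; case: (t + q) tq => [//|k] _ /=.
    suff -> : last B.-1 (nseq k B.-1) = B.-1 by lia.
    by elim: k.
  have dl := digits_num B HB l lall llast.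
  set y := num B l.
  have Hy : H B y = H B g'.
    rewrite HD /H dl /l map_cat sumn_cat sumsq_nseq Nqr /= Er -/P -!mulnn addn0; lia.
  have sl : size l = 4 + (t + q) by rewrite /l size_cat size_nseq.
  have big : q + 4 < size R.
    have NRb : N <= size R * (B - 2) ^ 2 := NR.
    have key : (q + 4) * (B - 2) ^ 2 < N.
      apply: arith_key => //; rewrite Nqr; exact: leq_addr.
    case: (leqP (size R) (q + 4)) => // hR.
    have : size R * (B - 2) ^ 2 <= (q + 4) * (B - 2) ^ 2 by rewrite leq_mul2r hR orbT.
    lia.
  have ypos : 0 < y by apply: (num_pos B) => //; rewrite /l.
  have yn1 : y != 1.
    apply/eqP => y1; move: dl; rewrite -/y y1 (digitsS B HB) // divn_small // digits0 => /(congr1 size).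
  have := swap y ypos yn1 Hy.
  have ylt := num_lt B HB l lall.
  have g'ge := digits_size B HB g' g'1.
  rewrite -/D sD sl in g'ge ylt.
  have : B ^ (4 + (t + q)) <= B ^ (t + size R).-1 by rewrite leq_exp2l //; lia.
  rewrite -/y; lia.
have : g %/ P < t + (2 * B - 3).
  rewrite ltn_divLR //; lia.
rewrite /P /t; lia.
Qed.
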